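(* Let $a,b\in\mathbb{H}$ be nonzero quaternions lying in the same closed orthant of $\mathbb{R}^4$, and let $\lambda,\mu\in\mathbb{H}$. Then \[ \big\|(a+b)^{-1}(a\lambda+b\mu)-\lambda\big\| \le \|\mu-\lambda\|. \]
   Context: A quaternion $w+xi+yj+zk$ is identified with the vector $(w,x,y,z)\in\mathbb{R}^4$, and $\|\cdot\|$ is the Euclidean norm (which is multiplicative on $\mathbb{H}$). Two vectors lie in the same closed orthant if for each coordinate their entries do not have strictly opposite signs. *)

(* Defs.v *)
From Stdlib Require Import Reals.
Open Scope R_scope.

(* The quaternion w + x i + y j + z k, identified with (w,x,y,z) in R^4. *)
Record quat : Type := Quat { qw : R; qx : R; qy : R; qz : R }.

Definition qzero : quat := Quat 0 0 0 0.

Definition qadd (p q : quat) : quat :=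
  Quat (qw p + qw q) (qx p + qx q) (qy p + qy q) (qz p + qz q).

Definition qopp (p : quat) : quat := Quat (- qw p) (- qx p) (- qy p) (- qz p).

Definition qsub (p q : quat) : quat := qadd p (qopp q).

Definition qmul (p q : quat) : quat :=
  Quat (qw p * qw q - qx p * qx q - qy p * qy q - qz p * qz q)
       (qw p * qx q + qx p * qw q + qy p * qz q - qz p * qy q)
       (qw p * qy q - qx p * qz q + qy p * qw q + qz p * qx q)
       (qw p * qz q + qx p * qy q - qy p * qx q + qz p * qw q).

Definition qnormsq (p : quat) : R :=
  qw p * qw p + qx p * qx p + qy p * qy p + qz p * qz p.

Definition qnorm (p : quat) : R := sqrt (qnormsq p).

Definition qconj (p : quat) : quat := Quat (qw p) (- qx p) (- qy p) (- qz p).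

Definition qscale (r : R) (p : quat) : quat :=
  Quat (r * qw p) (r * qx p) (r * qy p) (r * qz p).

(* Multiplicative inverse: conj(p) / |p|^2 (only meaningful for p <> 0). *)
Definition qinv (p : quat) : quat := qscale (/ qnormsq p) (qconj p).

Definition not_opp_sign (s t : R) : Prop :=
  ~ (s < 0 /\ 0 < t) /\ ~ (0 < s /\ t < 0).

Definition same_closed_orthant (a b : quat) : Prop :=
  not_opp_sign (qw a) (qw b) /\ not_opp_sign (qx a) (qx b) /\
  not_opp_sign (qy a) (qy b) /\ not_opp_sign (qz a) (qz b).

(* Main.v *)
Require Import Defs.
From Stdlib Require Import Reals Lra Psatz.
Open Scope R_scope.

Lemma qnormsq_ge0 p : 0 <= qnormsq p.
Proof. destruct p; unfold qnormsq; simpl; nra. Qed.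

Lemma qnormsq_mul p q : qnormsq (qmul p q) = qnormsq p * qnormsq q.
Proof. destruct p, q; unfold qnormsq, qmul; simpl; ring. Qed.

Lemma qnormsq_scale r p : qnormsq (qscale r p) = r * r * qnormsq p.
Proof. destruct p; unfold qnormsq, qscale; simpl; ring. Qed.

Lemma qnormsq_conj p : qnormsq (qconj p) = qnormsq p.
Proof. destruct p; unfold qnormsq, qconj; simpl; ring. Qed.

Lemma nz_pos p : p <> qzero -> 0 < qnormsq p.
Proof.
  destruct p as [w x y z]; unfold qnormsq; simpl; intro H.
  destruct (Req_dec w 0); destruct (Req_dec x 0); destruct (Req_dec y 0);
  destruct (Req_dec z 0); subst; try (exfalso; apply H; reflexivity); nra.
Qed.

Lemma key s b lam mu : 0 < qnormsq s ->
  qsub (qmul (qinv s) (qadd (qmul (qsub s b) lam) (qmul b mu))) lam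
  = qscale (/ qnormsq s) (qmul (qconj s) (qmul b (qsub mu lam))).
Proof.
  intro H. assert (Hn : qnormsq s <> 0) by lra.
  destruct s as [sw sx sy sz], b, lam, mu.
  unfold qnormsq in *; simpl in *.
  unfold qsub, qmul, qinv, qadd, qopp, qscale, qconj, qnormsq; simpl.
  f_equal; field; exact Hn.
Qed.

Theorem lemma4p2 (a b lam mu : quat) :
  a <> qzero -> b <> qzero -> same_closed_orthant a b ->
  qnorm (qsub (qmul (qinv (qadd a b)) (qadd (qmul a lam) (qmul b mu))) lam)
    <= qnorm (qsub mu lam).
Proof.
  intros Ha Hb Ho.
  assert (Hab : qnormsq b <= qnormsq (qadd a b) /\ qnormsq a <= qnormsq (qadd a b)).
  { destruct a as [w x y z], b as [w' x' y' z'].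
    unfold same_closed_orthant, not_opp_sign, qnormsq, qadd in *; simpl in *.
    destruct Ho as [[H1 H2] [[H3 H4] [[H5 H6] [H7 H8]]]].
    assert (0 <= w*w') by (destruct (Rle_lt_dec 0 w); destruct (Rle_lt_dec 0 w'); nra).
    assert (0 <= x*x') by (destruct (Rle_lt_dec 0 x); destruct (Rle_lt_dec 0 x'); nra).
    assert (0 <= y*y') by (destruct (Rle_lt_dec 0 y); destruct (Rle_lt_dec 0 y'); nra).
    assert (0 <= z*z') by (destruct (Rle_lt_dec 0 z); destruct (Rle_lt_dec 0 z'); nra).
    split; nra. }
  destruct Hab as [Hb1 Ha1].
  pose proof (nz_pos a Ha) as Hpa.
  assert (HN : 0 < qnormsq (qadd a b)) by lra.
  assert (Ea : a = qsub (qadd a b) b).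
  { destruct a, b; unfold qsub, qadd, qopp; simpl; f_equal; ring. }
  replace (qmul a lam) with (qmul (qsub (qadd a b) b) lam) by (rewrite <- Ea; reflexivity).
  rewrite key by exact HN.
  unfold qnorm. apply sqrt_le_1_alt.
  rewrite qnormsq_scale, !qnormsq_mul, qnormsq_conj.
  set (N := qnormsq (qadd a b)) in *.
  pose proof (qnormsq_ge0 (qsub mu lam)).
  pose proof (qnormsq_ge0 b).
  set (D := qnormsq (qsub mu lam)) in *.
  set (B := qnormsq b) in *.
  replace (/ N * / N * (N * (B * D))) with (B * D / N) by (field; lra).
  apply Rmult_le_reg_r with N; [lra|].
  unfold Rdiv. rewrite Rmult_assoc, Rinv_l by lra. nra.
Qed.
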